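(* Let $X$ be a real Hilbert space, $f:X\to\mathbb{R}\cup\{+\infty\}$ a proper $\Phi_{lsc}$-convex function and $\bar x\in\mathrm{dom}(f)$. Then $\partial_{lsc}f(\bar x)\neq\emptyset$ if and only if $\partial_P f(\bar x)\ne\emptyset$.
   Context: $\Phi_{lsc}$ is the class of functions $\varphi(x)=-a\|x\|^2+\langle v,x\rangle+c$ ($a\ge0$, $v\in X^*$, $c\in\mathbb{R}$); $f$ is $\Phi_{lsc}$-convex if it is the pointwise supremum of the $\varphi\in\Phi_{lsc}$ with $\varphi\le f$; proper means at least one such $\varphi$ exists and $\mathrm{dom}(f)=\{x:f(x)<+\infty\}\ne\emptyset$. $\partial_{lsc}f(\bar x)$ is the set of $(a,v)\in\mathbb{R}_+\times X^*$ with $f(x)-f(\bar x)\ge\langle v,x-\bar x\rangle-a\|x\|^2+a\|\bar x\|^2$ for all $x\in X$. The proximal subdifferential $\partial_Pf(\bar x)$ is the set of $v\in X^*$ for which there exist $\delta>0$ and $\rho\ge0$ with $f(x)\ge f(\bar x)+\langle v,x-\bar x\rangle-\tfrac12\rho\|x-\bar x\|^2$ for all $x$ with $\|x-\bar x\|<\delta$. *)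

(* Defs.v *)
From Stdlib Require Import Reals.
Open Scope R_scope.

Record HilbertSpace := {
  hcar :> Type;
  hadd : hcar -> hcar -> hcar;
  hopp : hcar -> hcar;
  hzero : hcar;
  hscal : R -> hcar -> hcar;
  hinner : hcar -> hcar -> R;
  hadd_assoc : forall x y z, hadd x (hadd y z) = hadd (hadd x y) z;
  hadd_comm : forall x y, hadd x y = hadd y x;
  hadd_zero : forall x, hadd x hzero = x;
  hadd_opp : forall x, hadd x (hopp x) = hzero;
  hscal_one : forall x, hscal 1 x = x;
  hscal_assoc : forall a b x, hscal a (hscal b x) = hscal (a * b) x;
  hscal_distr_l : forall a x y, hscal a (hadd x y) = hadd (hscal a x) (hscal a y);
  hscal_distr_r : forall a b x, hscal (a + b) x = hadd (hscal a x) (hscal b x);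
  hinner_sym : forall x y, hinner x y = hinner y x;
  hinner_add_l : forall x y z, hinner (hadd x y) z = hinner x z + hinner y z;
  hinner_scal_l : forall a x y, hinner (hscal a x) y = a * hinner x y;
  hinner_pos : forall x, 0 <= hinner x x;
  hinner_def : forall x, hinner x x = 0 -> x = hzero;
  hcomplete : forall u : nat -> hcar,
    (forall eps, eps > 0 -> exists N : nat, forall m n, (m >= N)%nat -> (n >= N)%nat ->
        sqrt (hinner (hadd (u m) (hopp (u n))) (hadd (u m) (hopp (u n)))) < eps) ->
    exists l, forall eps, eps > 0 -> exists N : nat, forall n, (n >= N)%nat ->
        sqrt (hinner (hadd (u n) (hopp l)) (hadd (u n) (hopp l))) < eps
}.

Section Ops.
Variable X : HilbertSpace.
Definition hsub (x y : X) : X := hadd X x (hopp X y).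
Definition hnorm (x : X) : R := sqrt (hinner X x x).

(** Topological dual X^*: continuous (= bounded) linear functionals. *)
Definition is_dual (v : X -> R) : Prop :=
  (forall x y, v (hadd X x y) = v x + v y) /\
  (forall a x, v (hscal X a x) = a * v x) /\
  (exists M, forall x, Rabs (v x) <= M * hnorm x).
End Ops.
Arguments hsub {X}.
Arguments hnorm {X}.
Arguments is_dual {X}.

Inductive ERp := Fin (r : R) | PInf.

Definition ERle (a b : ERp) : Prop :=
  match a, b with
  | _, PInf => True
  | PInf, Fin _ => False
  | Fin x, Fin y => x <= y
  end.

Definition ERlt (a b : ERp) : Prop :=
  match a, b with
  | Fin x, PInf => True
  | PInf, _ => False
  | Fin x, Fin y => x < y
  end.

(** real part (used only on points of the domain) *)
Definition ERval (a : ERp) : R := match a with Fin r => r | PInf => 0 end.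

Section PhiConvex.
Variable X : HilbertSpace.

Definition dom (f : X -> ERp) (x : X) : Prop := exists r, f x = Fin r.

Definition phi_lsc (a : R) (v : X -> R) (c : R) (x : X) : R :=
  - a * (hnorm x) ^ 2 + v x + c.

Definition in_Phi_lsc (a : R) (v : X -> R) : Prop := 0 <= a /\ is_dual v.

Definition Phi_minorant (f : X -> ERp) (a : R) (v : X -> R) (c : R) : Prop :=
  in_Phi_lsc a v /\ forall x, ERle (Fin (phi_lsc a v c x)) (f x).

(** f is the pointwise supremum of its Phi_lsc minorants *)
Definition Phi_lsc_convex (f : X -> ERp) : Prop :=
  forall x, forall r : R, ERlt (Fin r) (f x) ->
    exists a v c, Phi_minorant f a v c /\ r < phi_lsc a v c x.
(* (the upper-bound half of "f x = sup" holds by definition of minorant) *)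

Definition proper_Phi (f : X -> ERp) : Prop :=
  (exists a v c, Phi_minorant f a v c) /\ (exists x, dom f x).

Definition subdiff_lsc (f : X -> ERp) (xbar : X) (a : R) (v : X -> R) : Prop :=
  0 <= a /\ is_dual v /\
  forall x, ERle (Fin (ERval (f xbar) + v (hsub x xbar)
                       - a * (hnorm x) ^ 2 + a * (hnorm xbar) ^ 2)) (f x).

Definition subdiff_P (f : X -> ERp) (xbar : X) (v : X -> R) : Prop :=
  is_dual v /\
  exists delta rho, delta > 0 /\ rho >= 0 /\
    forall x, hnorm (hsub x xbar) < delta ->
      ERle (Fin (ERval (f xbar) + v (hsub x xbar)
                 - / 2 * rho * (hnorm (hsub x xbar)) ^ 2)) (f x).
End PhiConvex.
Arguments dom {X}.
Arguments Phi_lsc_convex {X}.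
Arguments proper_Phi {X}.
Arguments subdiff_lsc {X}.
Arguments subdiff_P {X}.

(* Main.v *)
Require Import Defs.
From Stdlib Require Import Reals.
From Stdlib Require Import Lra Psatz.
Open Scope R_scope.

Section L.
Variable X : HilbertSpace.
Notation ip := (hinner X).
Notation ad := (hadd X).

Lemma ip_zero_l (y : X) : ip (hzero X) y = 0.
Proof.
  assert (H := hinner_add_l X (hzero X) (hzero X) y).
  rewrite hadd_zero in H. lra.
Qed.

Lemma ip_add_r (x y z : X) : ip x (ad y z) = ip x y + ip x z.
Proof. rewrite !(hinner_sym X x), hinner_add_l. reflexivity. Qed.

Lemma ip_scal_r a (x y : X) : ip x (hscal X a y) = a * ip x y.
Proof. rewrite !(hinner_sym X x), hinner_scal_l. reflexivity. Qed.

Lemma ip_zero_r (y : X) : ip y (hzero X) = 0.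
Proof. rewrite hinner_sym. apply ip_zero_l. Qed.

Lemma norm_sq (x : X) : hnorm x ^ 2 = ip x x.
Proof. unfold hnorm. rewrite pow2_sqrt; auto. apply hinner_pos. Qed.

Lemma norm_ge0 (x : X) : 0 <= hnorm x.
Proof. unfold hnorm. apply sqrt_pos. Qed.

Lemma ip_expand (a b : X) : ip (ad a b) (ad a b) = ip a a + 2 * ip a b + ip b b.
Proof.
  rewrite hinner_add_l, !ip_add_r, (hinner_sym X b a). ring.
Qed.

Lemma cs_sq (x y : X) : ip x y ^ 2 <= ip x x * ip y y.
Proof.
  destruct (Req_dec (ip y y) 0) as [H0|H0].
  - assert (T := hinner_pos X x). apply hinner_def in H0. subst. rewrite !ip_zero_r. nra.
  - assert (Hp : 0 < ip y y) by (assert (T := hinner_pos X y); lra).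
    set (t := - ip x y / ip y y).
    assert (H := hinner_pos X (ad x (hscal X t y))).
    rewrite ip_expand, ip_scal_r, hinner_scal_l, ip_scal_r in H.
    unfold t in H.
    assert (E : ip x x + 2 * (- ip x y / ip y y * ip x y) +
              - ip x y / ip y y * (- ip x y / ip y y * ip y y)
              = (ip x x * ip y y - ip x y ^ 2) / ip y y) by (field; lra).
    rewrite E in H.
    assert (0 <= ip x x * ip y y - ip x y ^ 2).
    { apply Rmult_le_reg_r with (/ ip y y).
      apply Rinv_0_lt_compat; lra. rewrite Rmult_0_l. exact H. }
    lra.
Qed.

Lemma cs (x y : X) : Rabs (ip x y) <= hnorm x * hnorm y.
Proof.
  assert (H := cs_sq x y). rewrite <- !norm_sq in H.
  assert (A := norm_ge0 x). assert (B := norm_ge0 y).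
  assert (P := Rmult_le_pos _ _ A B).
  destruct (Rle_dec (Rabs (ip x y)) (hnorm x * hnorm y)) as [?|N]; [assumption|].
  exfalso. apply Rnot_le_lt in N.
  assert (E : Rabs (ip x y) ^ 2 = ip x y ^ 2) by (rewrite RPow_abs; apply Rabs_pos_eq; apply pow2_ge_0).
  assert (hnorm x * hnorm y * (hnorm x * hnorm y) < Rabs (ip x y) * Rabs (ip x y)).
  { apply Rmult_le_0_lt_compat; lra. }
  nra.
Qed.

Lemma decomp (x xb : X) : x = ad (hsub x xb) xb.
Proof.
  unfold hsub. rewrite <- hadd_assoc, (hadd_comm X (hopp X xb) xb), hadd_opp,
    hadd_zero. reflexivity.
Qed.

Lemma dual_shift (v : X -> R) (c : R) (xb : X) :
  is_dual v -> is_dual (fun h => v h + c * ip xb h).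
Proof.
  intros [Ha [Hs [M HM]]]. split; [|split].
  - intros x y. rewrite Ha, ip_add_r. ring.
  - intros a x. rewrite Hs, ip_scal_r. ring.
  - exists (M + Rabs c * hnorm xb). intros x.
    assert (H1 := HM x). assert (H2 := cs xb x).
    assert (H3 := Rabs_triang (v x) (c * ip xb x)).
    rewrite Rabs_mult in H3.
    assert (H4 : Rabs c * Rabs (ip xb x) <= Rabs c * (hnorm xb * hnorm x))
      by (apply Rmult_le_compat_l; [apply Rabs_pos|exact H2]).
    nra.
Qed.

Lemma norm_expand (x xb : X) :
  hnorm x ^ 2 = hnorm (hsub x xb) ^ 2 + 2 * ip xb (hsub x xb) + hnorm xb ^ 2.
Proof.
  rewrite !norm_sq. rewrite (decomp x xb) at 1 2.
  rewrite ip_expand, (hinner_sym X (hsub x xb) xb). ring.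
Qed.

End L.

Theorem mainTheorem8 (X : HilbertSpace) (f : X -> ERp) (xbar : X) :
  proper_Phi f -> Phi_lsc_convex f -> dom f xbar ->
  ((exists a v, subdiff_lsc f xbar a v) <-> (exists v, subdiff_P f xbar v)).
Proof.
  intros [[a0 [v0 [c0 [[Ha0 Hv0] Hmin]]]] _] _ [r Hr].
  split.
  - intros [a [v [Ha [Hv H]]]].
    exists (fun h => v h + (-2 * a) * hinner X xbar h). split.
    + apply dual_shift; exact Hv.
    + exists 1, (2 * a). split; [lra|split; [lra|]].
      intros x _. specialize (H x). rewrite Hr in *. change (ERval (Fin r)) with r in *.
      rewrite (norm_expand X x xbar) in H.
      destruct (f x); [|exact I]. unfold ERle in *. lra.
  - intros [v [Hv [d [rho [Hd [Hrho H]]]]]].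
    destruct Hv as [Hva [Hvs [M HM]]].
    destruct Hv0 as [Hv0a [Hv0s [M0 HM0]]].
    set (M' := Rmax M 0). set (M0' := Rmax M0 0).
    set (s := hnorm xbar).
    set (K := r + 2 * a0 * s ^ 2 - v0 xbar - c0).
    set (B := M' + M0').
    set (C := (B + Rabs K / d + 1) / d).
    set (A := 2 * a0 + rho / 2 + C).
    assert (HM'0 : 0 <= M') by (apply Rmax_r).
    assert (HM00 : 0 <= M0') by (apply Rmax_r).
    assert (HCd : C * d = B + Rabs K / d + 1) by (unfold C; field; lra).
    assert (HK0 : 0 <= Rabs K) by apply Rabs_pos.
    assert (HKd : 0 <= Rabs K / d) by (apply Rmult_le_pos; [lra| left; apply Rinv_0_lt_compat; lra]).
    assert (HC0 : 0 <= C).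
    { unfold C, B. apply Rmult_le_pos; [lra| left; apply Rinv_0_lt_compat; lra]. }
    exists A, (fun h => v h + (2 * A) * hinner X xbar h).
    split; [unfold A; lra|split].
    + apply dual_shift. split; [exact Hva|split; [exact Hvs|exists M; exact HM]].
    + intros x. rewrite Hr. change (ERval (Fin r)) with r.
      rewrite (norm_expand X x xbar).
      set (h := hsub x xbar). fold s.
      assert (Ht0 := norm_ge0 X h). set (t := hnorm h) in *.
      assert (Hvh : v h <= M' * t).
      { assert (T := HM h). assert (T2 := Rle_abs (v h)).
        assert (M * t <= M' * t) by (apply Rmult_le_compat_r; [lra|apply Rmax_l]).
        fold t in T. lra. }
      destruct (f x) as [y|] eqn:Efx; [|exact I]. unfold ERle.
      destruct (Rlt_le_dec t d) as [Hlt|Hge].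
      * specialize (H x Hlt). rewrite Hr, Efx in H. change (ERval (Fin r)) with r in H. unfold ERle in H. fold h t in H.
        assert (rho / 2 * t ^ 2 <= A * t ^ 2).
        { apply Rmult_le_compat_r. nra. unfold A. lra. }
        lra.
      * specialize (Hmin x). rewrite Efx in Hmin. unfold ERle in Hmin.
        unfold phi_lsc in Hmin.
        rewrite (norm_expand X x xbar) in Hmin. fold h t s in Hmin.
        assert (Ev : v0 x = v0 h + v0 xbar) by (unfold h; rewrite <- Hv0a, <- decomp; reflexivity).
        fold h in Hmin.
        assert (Hcs := cs X xbar h). fold s t in Hcs.
        assert (Hs0 : 0 <= s) by apply norm_ge0.
        assert (Hip : 2 * hinner X xbar h <= t ^ 2 + s ^ 2).
        { assert (T := Rle_abs (hinner X xbar h)). assert (T4 : 0 <= (t - s) ^ 2) by apply pow2_ge_0. assert (T5 : s * t <= (t ^ 2 + s ^ 2) / 2) by nra. lra. }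
        assert (Hv0h : - (M0' * t) <= v0 h).
        { assert (T := HM0 h). fold t in T.
          assert (M0 * t <= M0' * t) by (apply Rmult_le_compat_r; [lra|apply Rmax_l]).
          assert (T3 : - v0 h <= Rabs (v0 h)).
          { rewrite <- Rabs_Ropp. apply Rle_abs. }
          lra. }
        assert (Hq : a0 * (t ^ 2 + 2 * hinner X xbar h + s ^ 2) <= a0 * (2 * t ^ 2 + 2 * s ^ 2))
          by (apply Rmult_le_compat_l; lra).
        assert (Hk1 : C * d * t <= C * t * t).
        { assert (C * d <= C * t) by (apply Rmult_le_compat_l; lra). nra. }
        assert (Hk2 : Rabs K <= Rabs K / d * t).
        { assert (Rabs K / d * d = Rabs K) by (field; lra).
          assert (Rabs K / d * d <= Rabs K / d * t) by (apply Rmult_le_compat_l; lra).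
          lra. }
        assert (Hk : B * t + Rabs K <= C * t ^ 2).
        { rewrite HCd in Hk1. nra. }
        assert (HKa := Rle_abs K).
        assert (Ht2 : 0 <= t ^ 2) by nra.
        assert (rho / 2 * t ^ 2 >= 0) by nra.
        unfold A, K, B in *. nra.
Qed.
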